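(* Let $(A,\Delta)$ be an algebraic quantum hypergroup. If $A$ has an identity $1$, then $\Delta(1)=1\otimes1$.
   Context: **Standing definitions.** All algebras are over $\mathbb C$, associative, possibly without identity, with non-degenerate product. $M(A)$ denotes the multiplier algebra and $\iota$ the identity map. *Comultiplication.* A regular comultiplication is a linear map $\Delta:A\to M(A\otimes A)$, not assumed multiplicative, such that: - $\Delta(a)(1\otimes b)$, $(a\otimes1)\Delta(b)$, $\Delta(a)(b\otimes1)$ and $(1\otimes a)\Delta(b)$ lie in $A\otimes A$; - $(a\otimes1\otimes1)(\Delta\otimes\iota)(\Delta(b)(1\otimes c))=(\iota\otimes\Delta)((a\otimes1)\Delta(b))(1\otimes1\otimes c)$. *Counit.* A counit is a homomorphism $\varepsilon:A\to\mathbb C$ with $(\varepsilon\otimes\iota)\Delta=\iota=(\iota\otimes\varepsilon)\Delta$. *Integrals.* A left integral is a nonzero $\varphi$ with $(\iota\otimes\varphi)\Delta(a)=\varphi(a)1$ in $M(A)$. A functional is faithful if $f(ab)=0\ \forall b$ or $f(ba)=0\ \forall b$ forces $a=0$. *Antipode.* An antipode relative to a faithful left integral $\varphi$ is a bijective linear anti-homomorphism $S:A\to A$ with $S((\iota\otimes\varphi)(\Delta(a)(1\otimes b)))=(\iota\otimes\varphi)((1\otimes a)\Delta(b))$ for all $a,b$. *Algebraic quantum hypergroup.* A pair $(A,\Delta)$ with $\Delta$ a regular comultiplication admitting a counit, a faithful left integral $\varphi$ and an antipode relative to $\varphi$. *)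

(* Defs.v *)
From HB Require Import structures.
From mathcomp Require Import all_boot all_algebra complex.
From mathcomp Require Import reals.
Set Implicit Arguments. Unset Strict Implicit. Unset Printing Implicit Defensive.
Import GRing.Theory.
Local Open Scope ring_scope.

Section AQH.
Variable R : realType.
Local Notation C := (R[i]).
Variable A : algType C.

(* Elements of A (x) A are represented by finite lists of elementary
   tensors  [:: (a1,b1); ...; (an,bn)]  standing for  sum_i a_i (x) b_i;
   elements of A (x) A (x) A by lists of triples ((a,b),c). *)
Definition tens2 := seq (A * A).
Definition tens3 := seq (A * A * A).

(* Two tensors are equal in A (x) A iff all functionals f (x) g agree on them
   (the canonical map A (x) A -> Bil(dual A, dual A) is injective). *)
Definition tev2 (f g : A -> C) (s : tens2) : C :=
  \sum_(p <- s) f p.1 * g p.2.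
Definition teq2 (s t : tens2) : Prop :=
  forall f g : {scalar A}, tev2 f g s = tev2 f g t.

Definition tev3 (f g h : A -> C) (s : tens3) : C :=
  \sum_(p <- s) f p.1.1 * g p.1.2 * h p.2.
Definition teq3 (s t : tens3) : Prop :=
  forall f g h : {scalar A}, tev3 f g h s = tev3 f g h t.

Definition tmul2 (s t : tens2) : tens2 :=
  [seq (p.1 * q.1, p.2 * q.2) | p <- s, q <- t].
Definition tmul3 (s t : tens3) : tens3 :=
  [seq ((p.1.1 * q.1.1, p.1.2 * q.1.2), p.2 * q.2) | p <- s, q <- t].
Definition tscale2 (c : C) (s : tens2) : tens2 :=
  [seq (c *: p.1, p.2) | p <- s].

Definition comul_l (D : A -> tens2) (s : tens2) : tens3 :=
  flatten [seq [seq ((q.1, q.2), p.2) | q <- D p.1] | p <- s].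
Definition comul_r (D : A -> tens2) (s : tens2) : tens3 :=
  flatten [seq [seq ((p.1, q.1), q.2) | q <- D p.2] | p <- s].

Definition slice_r (f : A -> C) (s : tens2) : A := \sum_(p <- s) f p.2 *: p.1.
Definition slice_l (f : A -> C) (s : tens2) : A := \sum_(p <- s) f p.1 *: p.2.

(* Regular comultiplication (A unital, so M(A (x) A) = A (x) A and the
   four "lies in A (x) A" conditions are automatic). *)
Definition regular_comultiplication (D : A -> tens2) : Prop :=
  (forall (c : C) (a b : A), teq2 (D (c *: a + b)) (tscale2 c (D a) ++ D b)) /\
  (forall a b c : A,
     teq3 (tmul3 [:: ((a, 1), 1)] (comul_l D (tmul2 (D b) [:: (1, c)])))
          (tmul3 (comul_r D (tmul2 [:: (a, 1)] (D b))) [:: ((1, 1), c)])).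

Definition is_counit (D : A -> tens2) (eps : {scalar A}) : Prop :=
  (forall a b : A, eps (a * b) = eps a * eps b) /\
  (forall a : A, slice_l eps (D a) = a) /\
  (forall a : A, slice_r eps (D a) = a).

Definition is_left_integral (D : A -> tens2) (phi : {scalar A}) : Prop :=
  (exists a : A, phi a != 0) /\
  (forall a : A, slice_r phi (D a) = phi a *: 1).

Definition faithful_functional (phi : {scalar A}) : Prop :=
  (forall a : A, (forall b : A, phi (a * b) = 0) -> a = 0) /\
  (forall a : A, (forall b : A, phi (b * a) = 0) -> a = 0).

Definition is_antipode (D : A -> tens2) (phi : {scalar A}) (S : {linear A -> A})
  : Prop :=
  bijective S /\
  (forall a b : A, S (a * b) = S b * S a) /\
  (forall a b : A,
     S (slice_r phi (tmul2 (D a) [:: (1, b)])) =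
     slice_r phi (tmul2 [:: (1, a)] (D b))).

Definition algebraic_quantum_hypergroup (D : A -> tens2) : Prop :=
  regular_comultiplication D /\
  (exists eps : {scalar A}, is_counit D eps) /\
  (exists phi : {scalar A},
     is_left_integral D phi /\ faithful_functional phi /\
     exists S : {linear A -> A}, is_antipode D phi S).

End AQH.

(* Main.v *)
Require Import Defs.
From mathcomp Require Import all_boot all_algebra complex.
From mathcomp Require Import reals.
Import GRing.Theory.
Local Open Scope ring_scope.

Theorem lemma1p12 (R : realType) (A : algType R[i]) (D : A -> tens2 A) :
  algebraic_quantum_hypergroup D -> teq2 (D 1) [:: (1, 1)].
Proof.
move=> [_ [_ [phi [[_ Hint] [[Hf _] [S [[Sinv SK KS] [Smul Santi]]]]]]]].
have S1 : S 1 = 1.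
  by have := Smul (Sinv 1) 1; rewrite mulr1 KS mulr1.
have T : forall b, slice_r phi (tmul2 (D 1) [:: (1, b)]) = phi b *: 1.
  move=> b; apply: (can_inj SK).
  rewrite Santi linearZ /= S1 -Hint /slice_r /tmul2 /=.
  rewrite cats0 big_map; apply: eq_bigr => p _ /=; by rewrite !mul1r.
move=> f g.
have Hx : slice_l f (D 1) = f 1 *: 1.
  apply/eqP; rewrite -subr_eq0; apply/eqP; apply: Hf => b.
  rewrite mulrBl linearB /= -scalerAl mul1r linearZ /=.
  have := congr1 f (T b); rewrite linearZ /= /slice_r /tmul2 /= linear_sum /=.
  rewrite /slice_l mulr_suml linear_sum /=.
  rewrite flatten_map1 big_map => H; rewrite [f 1 * _]mulrC -H; apply/eqP; rewrite subr_eq0; apply/eqP.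
  apply: eq_bigr => p _ /=; rewrite -scalerAl !linearZ /= mulr1 mulrC.
  by [].
have := congr1 g Hx; rewrite /slice_l linear_sum linearZ /= => H.
rewrite /tev2 big_seq1 /= -H; apply: eq_bigr => p _.
rewrite linearZ /=. reflexivity. Qed.
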